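(* Let $n,m$ be positive integers and let $R_1,\dots,R_n:\{0,\dots,m\}\to\mathbb{R}$ be convex functions with $R_j(0)=0$. Then for every $k$ with $0\le k\le nm$ there exists an optimal $k$-profile $\mathbf{x}=(x_1,\dots,x_n)$ in which at most one index $j$ satisfies $0<x_j<m$.
   Context: A function $R:\{0,\dots,m\}\to\mathbb{R}$ is convex if $R(x+1)-R(x)$ is non-decreasing in $x$. A $k$-profile is a vector $\mathbf{x}=(x_1,\dots,x_n)$ with $x_j\in\{0,\dots,m\}$ and $\sum_j x_j=k$; it is optimal if its revenue $\sum_j R_j(x_j)$ is maximum among all $k$-profiles. *)

(* Defs.v *)
From mathcomp Require Import all_boot all_order all_algebra.
Set Implicit Arguments. Unset Strict Implicit. Unset Printing Implicit Defensive.
Import Order.TTheory GRing.Theory Num.Theory.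
Local Open Scope ring_scope.

Definition convex_fun (F : realFieldType) (m : nat) (R : 'I_m.+1 -> F) : Prop :=
  forall x : nat, (x.+2 <= m)%N ->
    R (inord x.+1) - R (inord x) <= R (inord x.+2) - R (inord x.+1).

Definition profile (n m k : nat) (x : 'I_n -> 'I_m.+1) : Prop :=
  (\sum_(j < n) (x j : nat))%N = k.

Definition revenue (F : realFieldType) (n m : nat)
  (R : 'I_n -> 'I_m.+1 -> F) (x : 'I_n -> 'I_m.+1) : F :=
  \sum_(j < n) R j (x j).

Definition optimal (F : realFieldType) (n m k : nat)
  (R : 'I_n -> 'I_m.+1 -> F) (x : 'I_n -> 'I_m.+1) : Prop :=
  profile k x /\
  forall y : 'I_n -> 'I_m.+1, profile k y -> revenue R y <= revenue R x.

(* Main.v *)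
Require Import Defs.
From mathcomp Require Import all_boot all_order all_algebra.
From mathcomp Require Import zify lra.
Import Order.TTheory GRing.Theory Num.Theory.
Local Open Scope ring_scope.

Lemma sum_split (V : nmodType) (n : nat) (f : 'I_n -> V) (i j : 'I_n) :
  i != j -> \sum_l f l = f i + f j + \sum_(l | (l != i) && (l != j)) f l.
Proof.
move=> ij; have ji : j != i by rewrite eq_sym.
by rewrite (bigD1 i) //= (bigD1 j) /= ?ji // addrA.
Qed.
Arguments sum_split {V n} f {i j}.

Lemma sum_splitn (n : nat) (f : 'I_n -> nat) (i j : 'I_n) :
  i != j -> (\sum_l f l = f i + f j + \sum_(l | (l != i) && (l != j)) f l)%N.
Proof. exact: sum_split. Qed.
Arguments sum_splitn {n} f {i j}.

Lemma aux a b : (b < a)%N -> (a.+1 * a.+1 + b*b <= a*a + b.+1*b.+1)%N -> False.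
Proof. rewrite !mulSn !mulnS; lia. Qed.

Theorem lemma4 (F : realFieldType) (n m : nat) (hn : (0 < n)%N) (hm : (0 < m)%N)
  (R : 'I_n -> 'I_m.+1 -> F)
  (hconv : forall j, convex_fun (R j))
  (hzero : forall j, R j ord0 = 0)
  (k : nat) (hk : (k <= n * m)%N) :
  exists x : 'I_n -> 'I_m.+1,
    optimal k R x /\
    (#|[pred j : 'I_n | (0 < x j)%N && (x j < m)%N]| <= 1)%N.
Proof.
pose prof (f : {ffun 'I_n -> 'I_m.+1}) := ((\sum_(j < n) (f j : nat))%N == k).
pose rev (f : {ffun 'I_n -> 'I_m.+1}) := revenue R f.
pose opt f := prof f && [forall g, prof g ==> (rev g <= rev f)].
pose pot (f : {ffun 'I_n -> 'I_m.+1}) := (\sum_(j < n) (f j : nat) ^ 2)%N.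
have [f0 pf0] : exists f0, prof f0.
  exists [ffun j : 'I_n => inord (minn m (k - j * m)) : 'I_m.+1].
  rewrite /prof.
  have -> : (\sum_(j < n) ([ffun j : 'I_n => inord (minn m (k - j * m)) : 'I_m.+1] j : nat)
      = \sum_(j < n) minn m (k - j * m))%N.
    by apply: eq_bigr => j _; rewrite ffunE inordK // ltnS geq_minl.
  suff -> : forall N, (\sum_(j < N) minn m (k - j * m) = minn k (N * m))%N.
    apply/eqP; lia.
  elim=> [|N IH]; first by rewrite big_ord0 mul0n minn0.
  rewrite big_ord_recr /= IH mulSn; lia.
have [xo oxo] : exists xo, opt xo.
  case: (@arg_maxP _ _ _ f0 prof rev pf0) => xo pxo maxo.
  exists xo; rewrite /opt pxo /=; apply/forallP => g; apply/implyP => pg; exact: maxo.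
case: (@arg_maxnP _ xo opt pot oxo) => x ox maxx.
have revE : forall y : 'I_n -> 'I_m.+1, rev [ffun l => y l] = revenue R y.
  by move=> y; apply: eq_bigr => l _; rewrite ffunE.
move/andP: (ox) => [/eqP px /forallP hx].
exists x; split.
  split => // y py.
  have := implyP (hx [ffun l => y l]); rewrite revE; apply.
  by rewrite /prof (eq_bigr (fun l => (y l : nat))) ?py // => l _; rewrite ffunE.
rewrite leqNgt; apply/negP => /card_gt1P [i [j [hi hj ij]]].
rewrite !inE in hi hj.
wlog hle : i j hi hj ij / (x j <= x i)%N.
  move=> H; case: (leqP (x j) (x i)) => h; first exact: (H i j).
  apply: (H j i) => //; first (by rewrite eq_sym); exact: ltnW.
move: hi hj => /andP[i0 im] /andP[j0 jm].
have ji : j != i by rewrite eq_sym.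
pose y := [ffun l => if l == i then inord (x i).+1 else if l == j then inord (x j).-1 else x l] : {ffun 'I_n -> 'I_m.+1}.
pose z := [ffun l => if l == i then inord (x i).-1 else if l == j then inord (x j).+1 else x l] : {ffun 'I_n -> 'I_m.+1}.
have yi : y i = inord (x i).+1 by rewrite ffunE eqxx.
have yj : y j = inord (x j).-1 by rewrite ffunE (negbTE ji) eqxx.
have zi : z i = inord (x i).-1 by rewrite ffunE eqxx.
have zj : z j = inord (x j).+1 by rewrite ffunE (negbTE ji) eqxx.
have yi' : (y i : nat) = (x i).+1 by rewrite yi inordK.
have yj' : (y j : nat) = (x j).-1 by rewrite yj inordK //; lia.
have zi' : (z i : nat) = (x i).-1 by rewrite zi inordK //; lia.
have zj' : (z j : nat) = (x j).+1 by rewrite zj inordK.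
have yo : forall l, (l != i) && (l != j) -> y l = x l.
  by move=> l /andP[li lj]; rewrite ffunE (negbTE li) (negbTE lj).
have zo : forall l, (l != i) && (l != j) -> z l = x l.
  by move=> l /andP[li lj]; rewrite ffunE (negbTE li) (negbTE lj).
have sx := sum_splitn (fun l => (x l : nat)) ij.
have py : prof y.
  rewrite /prof (sum_splitn (fun l => (y l : nat)) ij) /=.
  rewrite (eq_bigr (fun l => (x l : nat))); last by move=> l /yo ->.
  apply/eqP; rewrite -px sx /= yi' yj' addSnnS prednK //.
have pz : prof z.
  rewrite /prof (sum_splitn (fun l => (z l : nat)) ij) /=.
  rewrite (eq_bigr (fun l => (x l : nat))); last by move=> l /zo ->.
  apply/eqP; rewrite -px sx /= zi' zj' -addSnnS prednK //.
have rx := sum_split (fun l => R l (x l)) ij.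
have ry : rev y = R i (y i) + R j (y j) + \sum_(l | (l != i) && (l != j)) R l (x l).
  rewrite /rev /revenue (sum_split (fun l => R l (y l)) ij) /=.
  by rewrite (eq_bigr (fun l => R l (x l))) // => l /yo ->.
have rz : rev z = R i (z i) + R j (z j) + \sum_(l | (l != i) && (l != j)) R l (x l).
  rewrite /rev /revenue (sum_split (fun l => R l (z l)) ij) /=.
  by rewrite (eq_bigr (fun l => R l (x l))) // => l /zo ->.
have conv : forall (l : 'I_n), (0 < x l)%N -> (x l < m)%N ->
    R l (x l) - R l (inord (x l).-1) <= R l (inord (x l).+1) - R l (x l).
  move=> l l0 lm.
  have := hconv l (x l).-1; rewrite prednK // inord_val; apply; lia.
have ci := conv i i0 im.
have cj := conv j j0 jm.
have hzx : rev z <= rev x := implyP (hx z) pz.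
have hyx : rev x <= rev y.
  move: hzx; rewrite ry rz /rev /revenue rx yi yj zi zj; lra.
have oy : opt y.
  rewrite /opt py /=; apply/forallP => g; apply/implyP => pg.
  exact: le_trans (implyP (hx g) pg) hyx.
have := maxx y oy.
rewrite /pot (sum_splitn (fun l => (x l : nat) ^ 2)%N ij) (sum_splitn (fun l => (y l : nat) ^ 2)%N ij) /=.
rewrite (eq_bigr (fun l => (x l : nat) ^ 2)%N); last by move=> l /yo ->.
rewrite yi' yj' leq_add2r.
move: j0 hle; case: (nat_of_ord (x j)) => [//|b] _ hle /=; rewrite -!mulnn; exact: aux hle.
Qed.
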